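(* For every integer $n$, $$F_n^3=\frac{F_{n-1}F_{n+1}F_{n+2}+F_{n-2}F_{n-1}F_{n+1}}{6}+\frac{F_{n-2}F_{n+1}F_{n+2}-F_{n-2}F_{n-1}F_{n+2}}{2}.$$
   Context: $F_n$ denotes the Fibonacci numbers: $F_0=0,F_1=1$, $F_{n+1}=F_n+F_{n-1}$ for all $n\in\mathbb{Z}$ (so $F_{-m}=(-1)^{m+1}F_m$). *)

(* Defs.v *)
From Stdlib Require Import ZArith Reals.
Open Scope Z_scope.

Fixpoint fib_nat (n : nat) : Z :=
  match n with
  | O => 0
  | S O => 1
  | S ((S m) as p) => fib_nat p + fib_nat m
  end.

(* Extension to all integers: F_{-m} = (-1)^(m+1) F_m, which is the unique
   extension satisfying F_{n+1} = F_n + F_{n-1} for all n in Z. *)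
Definition fib (n : Z) : Z :=
  if 0 <=? n then fib_nat (Z.to_nat n)
  else (-1) ^ (- n + 1) * fib_nat (Z.to_nat (- n)).

(* Main.v *)
Require Import Defs.
From Stdlib Require Import ZArith Reals Lia Lra.
Open Scope R_scope.

Lemma fib_pos (k : nat) : fib (Z.of_nat k) = fib_nat k.
Proof. unfold fib. rewrite Nat2Z.id. destruct (Z.leb_spec 0 (Z.of_nat k)); lia || reflexivity. Qed.

Lemma fib_neg (k : nat) : fib (- Z.of_nat k) = ((-1) ^ (Z.of_nat k + 1) * fib_nat k)%Z.
Proof.
  destruct k as [|k]. { reflexivity. }
  unfold fib. destruct (Z.leb_spec 0 (- Z.of_nat (S k))). lia.
  rewrite Z.opp_involutive, Nat2Z.id. reflexivity.
Qed.

Lemma fib_rec (n : Z) : fib (n + 2) = (fib (n + 1) + fib n)%Z.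
Proof.
  destruct (Z.le_gt_cases 0 n) as [H|H].
  - destruct (Z_of_nat_complete n H) as [k ->].
    replace (Z.of_nat k + 2)%Z with (Z.of_nat (S (S k))) by lia.
    replace (Z.of_nat k + 1)%Z with (Z.of_nat (S k)) by lia.
    rewrite !fib_pos. simpl. destruct k; reflexivity.
  - destruct (Z.eq_dec n (-1)) as [->|Hn]. { reflexivity. }
    assert (Hk : (0 <= - n - 2)%Z) by lia.
    destruct (Z_of_nat_complete _ Hk) as [k Ek].
    replace n with (- Z.of_nat (S (S k)))%Z by lia.
    replace (- Z.of_nat (S (S k)) + 2)%Z with (- Z.of_nat k)%Z by lia.
    replace (- Z.of_nat (S (S k)) + 1)%Z with (- Z.of_nat (S k))%Z by lia.
    rewrite !fib_neg.
    change (fib_nat (S (S k))) with (fib_nat (S k) + fib_nat k)%Z.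
    replace (Z.of_nat (S (S k)) + 1)%Z with (Z.succ (Z.succ (Z.of_nat k + 1))) by lia.
    replace (Z.of_nat (S k) + 1)%Z with (Z.succ (Z.of_nat k + 1)) by lia.
    rewrite !Z.pow_succ_r by lia. ring.
Qed.

Theorem proposition2p5 : forall n : Z,
  (IZR (fib n)) ^ 3 =
    (IZR (fib (n - 1)) * IZR (fib (n + 1)) * IZR (fib (n + 2))
     + IZR (fib (n - 2)) * IZR (fib (n - 1)) * IZR (fib (n + 1))) / 6
  + (IZR (fib (n - 2)) * IZR (fib (n + 1)) * IZR (fib (n + 2))
     - IZR (fib (n - 2)) * IZR (fib (n - 1)) * IZR (fib (n + 2))) / 2.
Proof.
  intro n.
  pose proof (fib_rec (n - 2)) as h0. replace (n - 2 + 2)%Z with n in h0 by lia.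
  replace (n - 2 + 1)%Z with (n - 1)%Z in h0 by lia.
  pose proof (fib_rec (n - 1)) as h1. replace (n - 1 + 2)%Z with (n + 1)%Z in h1 by lia.
  replace (n - 1 + 1)%Z with n in h1 by lia.
  pose proof (fib_rec n) as h2.
  rewrite h2, h1, h0, !plus_IZR.
  field.
Qed.
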